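(* Let $n$ be a natural number and let $P\subseteq S_n$ be a subset of the symmetric group with $|P|=6$ such that for all $I,J\subseteq[n]$ the set $\{\pi\in P\mid \pi(I)=J\}$ has cardinality $0$ or at least $2$, and has cardinality $0$ or exactly $2$ if $|I|=|J|=1$. Then $n=3$ and $P=S_3$. *)

(* Defs.v *)
From mathcomp Require Export all_boot all_fingroup.
Set Implicit Arguments.
Unset Strict Implicit.
Unset Printing Implicit Defensive.

Definition nmaps (n : nat) (P : {set 'S_n}) (I J : {set 'I_n}) : nat :=
  #|[set s in P | (fun x => s x) @: I == J]|.

(* Main.v *)
Require Import Defs.
Set Implicit Arguments.
Unset Strict Implicit.
Unset Printing Implicit Defensive.

Lemma fiberE n (P : {set 'S_n}) x j :
  nmaps P [set x] [set j] = #|[set s in P | s x == j]|.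
Proof.
rewrite /nmaps; apply: eq_card => s; rewrite !inE imset_set1 (inj_eq set1_inj).
by [].
Qed.

Lemma two_elts (T : finType) (S : {set T}) x : #|S| = 2 -> x \in S ->
  exists y, [/\ y \in S, y != x & forall z, z \in S -> z != x -> z = y].
Proof.
move=> h2 hx; have := cardsD1 x S; rewrite hx h2 /= => /eqP; rewrite eqSS eq_sym => /cards1P [y hy].
have : y \in S :\ x by rewrite hy set11.
rewrite in_setD1 => /andP [hyx hyS].
exists y; split => //.
move=> z hz hzx; have : z \in S :\ x by rewrite in_setD1 hzx hz.
by rewrite hy => /set1P.
Qed.

Lemma fib2 n (P : {set 'S_n})
  (H1 : forall I J : {set 'I_n}, #|I| = 1 -> #|J| = 1 ->
     nmaps P I J = 0 \/ nmaps P I J = 2) x pi :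
  pi \in P -> #|[set s in P | s x == pi x]| = 2.
Proof.
move=> hp; have := H1 [set x] [set pi x] (cards1 _) (cards1 _).
rewrite fiberE => -[|//] H0.
have := cardsD1 pi [set s in P | s x == pi x].
by rewrite H0 inE hp eqxx.
Qed.

Lemma partner n (P : {set 'S_n})
  (H1 : forall I J : {set 'I_n}, #|I| = 1 -> #|J| = 1 ->
     nmaps P I J = 0 \/ nmaps P I J = 2) x pi :
  pi \in P -> exists s, [/\ s \in P, s != pi, s x = pi x &
     forall t, t \in P -> t != pi -> t x = pi x -> t = s].
Proof.
move=> hp; have hpi : pi \in [set s in P | s x == pi x] by rewrite inE hp eqxx.
have [y [hy hyx hu]] := two_elts (fib2 H1 x hp) hpi.
move: (hy); rewrite inE => /andP [hyP /eqP hyv].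
exists y; split => // t ht htp htx; apply: hu => //.
by rewrite inE ht htx eqxx.
Qed.

Lemma swapL n (P : {set 'S_n})
  (H2 : forall I J : {set 'I_n}, nmaps P I J = 0 \/ 2 <= nmaps P I J)
  pi a e : pi \in P -> a != e ->
  exists s, [/\ s \in P, s != pi & ((s a = pi a /\ s e = pi e) \/ s a = pi e)].
Proof.
move=> hp hae.
set S := [set s in P | (fun x => s x) @: [set a; e] == [set pi a; pi e]].
have hpS : pi \in S by rewrite inE hp imsetU1 imset_set1 eqxx.
have hge : 2 <= #|S|.
  have := H2 [set a; e] [set pi a; pi e]; rewrite /nmaps -/S => -[h0|//].
  by have := cardsD1 pi S; rewrite h0 hpS.
have : 0 < #|S :\ pi| by move: hge; rewrite (cardsD1 pi S) hpS.
case/card_gt0P => s; rewrite !inE => /and3P [hsp hsP /eqP hs].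
exists s; split => //.
rewrite imsetU1 imset_set1 in hs.
have hsa : s a \in [set pi a; pi e] by rewrite -hs !inE eqxx.
have hse : s e \in [set pi a; pi e] by rewrite -hs !inE eqxx orbT.
case/set2P: hsa => hsa; last by right.
left; split => //; case/set2P: hse => // hse.
by move: hae; rewrite -(inj_eq (@perm_inj _ s)) hsa hse eqxx.
Qed.

Lemma cardU0 (T : finType) (A B : {set T}) : A :&: B = set0 -> #|A :|: B| = #|A| + #|B|.
Proof. by move=> h; rewrite -cardsUI h cards0 addn0. Qed.

Lemma three n (P : {set 'S_n})
  (H6 : #|P| = 6)
  (H1 : forall I J : {set 'I_n}, #|I| = 1 -> #|J| = 1 ->
     nmaps P I J = 0 \/ nmaps P I J = 2) x (p1 p2 p3 q : 'S_n) :
  p1 \in P -> p2 \in P -> p3 \in P -> q \in P ->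
  p1 x != p2 x -> p1 x != p3 x -> p2 x != p3 x ->
  [|| q x == p1 x, q x == p2 x | q x == p3 x].
Proof.
move=> h1 h2 h3 hq d12 d13 d23; apply/negPn/negP => hn.
set G := fun j => [set s in P | s x == j].
have c1 := fib2 H1 x h1; have c2 := fib2 H1 x h2; have c3 := fib2 H1 x h3.
have cq := fib2 H1 x hq.
have hU : #|G (p1 x) :|: G (p2 x) :|: G (p3 x) :|: G (q x)| = 8.
  rewrite cardU0; last first.
    apply/setP => s; rewrite !inE; case: (s x =P q x) => [->|]; last by rewrite !andbF.
    by move: hn; rewrite !negb_or => /and3P [/negbTE -> /negbTE -> /negbTE ->]; rewrite !andbF.
  rewrite cardU0; last first.
    apply/setP => s; rewrite !inE; case: (s x =P p3 x) => [->|]; last by rewrite !andbF.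
    by rewrite eq_sym (negbTE d13) eq_sym (negbTE d23) !andbF.
  rewrite cardU0; last first.
    apply/setP => s; rewrite !inE; case: (s x =P p2 x) => [->|]; last by rewrite !andbF.
    by rewrite eq_sym (negbTE d12) !andbF.
  by rewrite /G c1 c2 c3 cq.
have : #|G (p1 x) :|: G (p2 x) :|: G (p3 x) :|: G (q x)| <= #|P|.
  apply: subset_leq_card; apply/subsetP => s; rewrite !inE.
  by case: (s \in P); rewrite ?andbF.
by rewrite hU H6.
Qed.

Lemma attain n (P : {set 'S_n})
  (H2 : forall I J : {set 'I_n}, nmaps P I J = 0 \/ 2 <= nmaps P I J)
  pi x s e : pi \in P -> s \in P -> s != pi -> s x = pi x ->
  (forall t, t \in P -> t != pi -> t x = pi x -> t = s) -> s e != pi e ->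
  exists2 t, t \in P & t x = pi e.
Proof.
move=> hp hs hsp hsx hu hse.
have hxe : x != e by apply: contraNneq hse => <-; rewrite hsx.
have [t [ht htp [[htx hte]|htx]]] := swapL H2 hp hxe; last by exists t.
by move: hse; rewrite -(hu t ht htp htx) hte eqxx.
Qed.

Theorem lemma3p4 (n : nat) (P : {set 'S_n}) :
  #|P| = 6 ->
  (forall I J : {set 'I_n}, nmaps P I J = 0 \/ 2 <= nmaps P I J) ->
  (forall I J : {set 'I_n}, #|I| = 1 -> #|J| = 1 ->
     nmaps P I J = 0 \/ nmaps P I J = 2) ->
  n = 3 /\ P = [set: 'S_n].
Proof.
move=> H6 H2 H1.
have [pi hp] : exists pi, pi \in P by apply/card_gt0P; rewrite H6.
have [s0] : exists s0, s0 \in P :\ pi.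
  by apply/card_gt0P; move: H6; rewrite (cardsD1 pi P) hp; case: #|P :\ pi|.
rewrite in_setD1 => /andP [hs0p hs0].
have : [exists a, s0 a != pi a].
  apply: contraT; rewrite negb_exists => /forallP h; rewrite -(negbTE hs0p).
  by apply/eqP/permP => a; apply/eqP; rewrite -[_ == _]negbK h.
case/existsP => a _.
have [sa [hsa hsap hsaa husa]] := partner H1 a hp.
have : [exists c, sa c != pi c].
  apply: contraT; rewrite negb_exists => /forallP h; rewrite -(negbTE hsap).
  by apply/eqP/permP => c; apply/eqP; rewrite -[_ == _]negbK h.
case/existsP => c hc.
have hca : c != a by apply: contraNneq hc => ->; rewrite hsaa.
have [sc [hsc hscp hscc husc]] := partner H1 c hp.
have hsca : sc a != pi a.
  apply/eqP => h; have := husa sc hsc hscp h; move=> e; move: hc.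
  by rewrite -e hscc eqxx.
have [t1 ht1 ht1a] := attain H2 hp hsa hsap hsaa husa hc.
have [t2 ht2 ht2c] := attain H2 hp hsc hscp hscc husc hsca.
have inj := @perm_inj _ pi.
have dA1 : pi a != t1 a by rewrite ht1a (inj_eq inj) eq_sym.
have dA2 : pi a != sc a by rewrite eq_sym.
have dA3 : t1 a != sc a by rewrite ht1a -hscc (inj_eq (@perm_inj _ sc)).
have dC1 : pi c != t2 c by rewrite ht2c (inj_eq inj).
have dC2 : pi c != sa c by rewrite eq_sym.
have dC3 : t2 c != sa c by rewrite ht2c -hsaa (inj_eq (@perm_inj _ sa)) eq_sym.
have thA := fun q (hq : q \in P) => three H6 H1 hp ht1 hsc hq dA1 dA2 dA3.
have thC := fun q (hq : q \in P) => three H6 H1 hp ht2 hsa hq dC1 dC2 dC3.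
set d := (pi^-1)%g (sc a).
have hd : pi d = sc a by rewrite /d permKV.
have hda : d != a by rewrite -(inj_eq inj) hd.
have hscd : sc d != pi d by rewrite hd (inj_eq (@perm_inj _ sc)).
have hd2 : pi d = sa c.
  have [t3 ht3 ht3c] := attain H2 hp hsc hscp hscc husc hscd.
  have := thC t3 ht3; rewrite ht3c ht2c !(inj_eq inj).
  case/or3P => [/eqP hdc|/eqP hda'|/eqP //].
    by move: hca; rewrite -(inj_eq (@perm_inj _ sc)) hscc -hdc hd eqxx.
  by move: hda; rewrite hda' eqxx.
have hall : forall e, e \in [:: a; c; d].
  move=> e; rewrite !inE.
  have [hse|hse] := eqVneq (sa e) (pi e); last first.
    have [t ht hte] := attain H2 hp hsa hsap hsaa husa hse.
    have := thA t ht; rewrite hte ht1a -hd !(inj_eq inj).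
    by [].
  have [hce|hce] := eqVneq (sc e) (pi e); last first.
    have [t ht hte] := attain H2 hp hsc hscp hscc husc hce.
    have := thC t ht; rewrite hte ht2c -hd2 !(inj_eq inj).
    by case/or3P => ->; rewrite ?orbT.
  have [se [hse' hsep hsee huse]] := partner H1 e hp.
  have e1 := huse sa hsa hsap hse; have e2 := huse sc hsc hscp hce.
  by move: hscc hc; rewrite e1 -e2 => ->; rewrite eqxx.
have hn3 : n <= 3.
  have : #|'I_n| <= #|[:: a; c; d]|.
    by apply: subset_leq_card; apply/subsetP => e _; apply: hall.
  by rewrite card_ord => /leq_trans; apply; apply: card_size.
have hfact : 6 <= n`!.
  by rewrite -H6 -card_Sn; apply: max_card.
have n3 : n = 3.
  by move: hn3 hfact; case: n {P H6 H2 H1 pi hp s0 hs0p hs0 a sa hsa hsap hsaa husa c hc hca sc hsc hscp hscc husc hsca t1 ht1 ht1a t2 ht2 ht2c inj dA1 dA2 dA3 dC1 dC2 dC3 thA thC d hd hda hscd hd2 hall} => [|[|[|[|]]]].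
split => //; subst n.
apply/eqP; rewrite eqEcard subsetT /= cardsT card_Sn H6.
by [].
Qed.
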